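(* Let $n\ge 3$, $k\ge 3$, and let $\alpha=a_1a_2\cdots a_n\in\mathbf{A}_k(n)$. Let $j$ be the index of the last symbol of $\alpha$ different from $k-1$, and $\ell$ the index of the second-last symbol of $\alpha$ different from $k-1$. If (i) $a_n<k-1$, or (ii) $a_j<k-2$, or (iii) $a_1\cdots a_\ell$ is not a palindrome, then $\mathrm{LastNonMax}(\alpha)\in\mathbf{A}_k(n)$. Otherwise (i.e., $a_n=k-1$, $a_j=k-2$, and $a_1\cdots a_\ell$ is a palindrome), $\mathrm{LastNonMax}(\alpha)$ is a symmetric bracelet.
   Context: Let $\Sigma=\{0,1,\dots,k-1\}$. Strings are compared lexicographically ($\alpha<\beta$ if $\alpha$ is a proper prefix of $\beta$, or $\alpha$ has the smaller symbol at the first index where they differ). For $\alpha=a_1\cdots a_n$, $\alpha^R=a_n\cdots a_1$; $\alpha$ is a palindrome if $\alpha=\alpha^R$. $[\alpha]$ is the set of rotations of $\alpha$. $\alpha$ is a necklace if it is the lexicographically smallest element of $[\alpha]$; a bracelet if it is the lexicographically smallest element of $[\alpha]\cup[\alpha^R]$. A necklace $\alpha$ is symmetric if $\alpha^R\in[\alpha]$, asymmetric otherwise. $\mathbf{A}_k(n)$ is the set of asymmetric bracelets of length $n$ over $\Sigma$. For $\alpha\neq(k-1)^n$ with $j$ the index of its last symbol different from $k-1$, $\mathrm{LastNonMax}(\alpha)=a_1\cdots a_{j-1}(a_j+1)(k-1)^{n-j}$. *)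

(* Defs.v *)
From mathcomp Require Import all_boot.
Set Implicit Arguments. Unset Strict Implicit. Unset Printing Implicit Defensive.

(* Strings over {0,...,k-1} are represented as [seq nat] whose entries are < k.
   Positions are 1-based in the paper: a_i = nth 0 s i.-1. *)

Definition over_alphabet (k : nat) (s : seq nat) : bool := all (fun x => x < k) s.

Fixpoint lex_le (a b : seq nat) : bool :=
  match a, b with
  | [::], _ => true
  | _ :: _, [::] => false
  | x :: a', y :: b' => (x < y) || ((x == y) && lex_le a' b')
  end.

Definition in_rotations (t s : seq nat) : bool :=
  [exists i : 'I_(size s), rot i s == t].

Definition is_necklace (s : seq nat) : bool :=
  [forall i : 'I_(size s), lex_le s (rot i s)].

Definition is_bracelet (s : seq nat) : bool :=
  [forall i : 'I_(size s), lex_le s (rot i s) && lex_le s (rot i (rev s))].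

Definition is_palindrome (s : seq nat) : bool := s == rev s.

Definition symmetric_necklace (s : seq nat) : bool :=
  is_necklace s && in_rotations (rev s) s.

Definition asymmetric_necklace (s : seq nat) : bool :=
  is_necklace s && ~~ in_rotations (rev s) s.

Definition in_A (k n : nat) (s : seq nat) : bool :=
  [&& size s == n, over_alphabet k s, is_bracelet s & asymmetric_necklace s].

Definition symmetric_bracelet (s : seq nat) : bool :=
  is_bracelet s && symmetric_necklace s.

(* LastNonMax(s) = a_1 ... a_{j-1} (a_j + 1) (k-1)^{n-j},
   j the index of the last symbol different from k-1. *)
Definition LastNonMax (k : nat) (s : seq nat) : seq nat :=
  let m := find (fun x => x != k.-1) (rev s) in
  let j := size s - m in
  take j.-1 s ++ (nth 0 s j.-1).+1 :: nseq m k.-1.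

(* Main.v *)
Require Import Defs.
From mathcomp Require Import all_boot zify.

Module Aux.

Lemma lex_refl s : lex_le s s.
Proof. by elim: s => //= x s ->; rewrite eqxx ltnn. Qed.

Lemma lex_trans a b c : lex_le a b -> lex_le b c -> lex_le a c.
Proof.
elim: a b c => // x a IH [|y b] [|z c] //=.
case: (ltngtP x y) => //= hxy; case: (ltngtP y z) => //= hyz.
- by rewrite (ltn_trans hxy hyz).
- by rewrite -hyz hxy.
- by rewrite hxy hyz.
- rewrite -hyz hxy ltnn eqxx /=; exact: IH.
Qed.

Lemma lex_cat x1 x2 y1 y2 : size x1 = size y1 ->
  lex_le (x1 ++ x2) (y1 ++ y2) = if x1 == y1 then lex_le x2 y2 else lex_le x1 y1.
Proof.
elim: x1 y1 => [|x x1 IH] [|y y1] //= [hs].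
rewrite eqseq_cons IH //.
case: (ltngtP x y) => //= hxy.
Qed.

Lemma lex_nseq M s : all (fun x => x <= M) s -> lex_le s (nseq (size s) M).
Proof.
elim: s => //= x s IH /andP[hx hs].
rewrite leq_eqVlt in hx; case/orP: hx => [/eqP ->|->] //.
by rewrite ltnn eqxx IH.
Qed.

Lemma lex_head_le x y s t : lex_le (x :: s) (y :: t) -> x <= y.
Proof. by move=> /= /orP[/ltnW|/andP[/eqP -> _]]. Qed.

Lemma revz (v : seq nat) b K : rev (v ++ b :: K) = rev K ++ b :: rev v.
Proof. by rewrite rev_cat rev_cons cat_rcons. Qed.

Lemma core (v : seq nat) a m M : all (fun x => x <= M) v -> a < M ->
  lex_le (v ++ a :: nseq m M) (rev (v ++ a :: nseq m M)) ->
  lex_le (v ++ a.+1 :: nseq m M) (rev (v ++ a.+1 :: nseq m M)) /\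
  (v ++ a.+1 :: nseq m M = rev (v ++ a.+1 :: nseq m M) ->
     (v = nseq (size v) M /\ size v < m /\ a.+1 = M) \/ v = nseq m M).
Proof.
move=> hv ha; rewrite !revz !rev_nseq => H.
case: (ltnP (size v) m) => hs.
  have Km : nseq m M = nseq (size v) M ++ nseq (m - size v).-1.+1 M.
    by rewrite -nseqD; congr nseq; lia.
  set d := (m - size v).-1.
  split.
    rewrite [in X in lex_le _ X]Km -catA lex_cat ?size_nseq //.
    case: eqP => hvn; last exact: lex_nseq.
    rewrite /=; case: (ltngtP a.+1 M) => //= ha1; first lia.
    rewrite ha1 [in rev v]hvn rev_nseq.
    have -> : nseq (m - size v).-1 M ++ M :: nseq (size v) M = nseq m M.
      by rewrite -[M :: _]/(nseq (size v).+1 M) -nseqD; congr nseq; lia.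
    exact: lex_refl.
  rewrite [in X in _ = X]Km -catA => /eqP; rewrite eqseq_cat ?size_nseq //.
  by move=> /andP[/eqP hv' /eqP [ha1 _]]; left.
have [w [v2 [Ev hw]]] : exists w v2, v = w ++ v2 /\ size w = m.
  by exists (take m v), (drop m v); rewrite cat_take_drop size_takel.
subst v; move: hv; rewrite all_cat => /andP[hw1 hv2].
rewrite -catA rev_cat lex_cat ?size_nseq // in H.
move: H; case: (w =P nseq m M) => hwK H; last first.
  split; first by rewrite -catA rev_cat lex_cat ?size_nseq // (introF eqP hwK).
  rewrite -catA rev_cat => /eqP; rewrite eqseq_cat ?size_nseq //.
  by move=> /andP[/eqP] /hwK.
subst w; split.
  rewrite -catA rev_cat lex_cat ?size_nseq // eqxx.
  case: v2 H hv2 hs => [|y v3] H _ _; first by rewrite /= rev_nseq ltnn eqxx lex_refl.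
  move: H; rewrite cat_cons => /lex_head_le hy; by rewrite /= ltnS hy.
rewrite -catA rev_cat => /eqP; rewrite eqseq_cat ?size_nseq // eqxx /=.
case: v2 H hv2 hs => [|y v3] H _ _; first by rewrite cats0; right.
move: H; rewrite cat_cons => /lex_head_le hy /eqP [hya _]; lia.
Qed.
Set Implicit Arguments. Unset Strict Implicit. Unset Printing Implicit Defensive.

Lemma rot_cat_le i (s1 s2 : seq nat) : i <= size s1 ->
  rot i (s1 ++ s2) = drop i s1 ++ s2 ++ take i s1.
Proof.
move=> hi; have := rot_size_cat (take i s1) (drop i s1 ++ s2).
by rewrite size_takel // catA cat_take_drop -catA.
Qed.

Lemma dropl_cat t (s1 s2 : seq nat) : t <= size s1 -> drop t (s1 ++ s2) = drop t s1 ++ s2.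
Proof.
move=> ht; rewrite drop_cat; case: ltnP => // h.
have -> : t = size s1 by apply/eqP; rewrite eqn_leq ht h.
by rewrite subnn drop0 drop_size.
Qed.

Lemma rot_rev_split (s : seq nat) t :
  rot (size (drop t s)) (rev s) = rev (take t s) ++ rev (drop t s).
Proof.
have := rot_size_cat (rev (drop t s)) (rev (take t s)).
by rewrite size_rev -rev_cat cat_take_drop.
Qed.

Lemma brP s : is_bracelet s -> forall i, i < size s ->
  lex_le s (rot i s) && lex_le s (rot i (rev s)).
Proof. move=> /forallP H i hi; exact: (H (Ordinal hi)). Qed.

Lemma brI s : (forall i, i < size s -> lex_le s (rot i s) && lex_le s (rot i (rev s))) ->
  is_bracelet s.
Proof. move=> H; apply/forallP => i; exact: H. Qed.

Lemma rot_rev_eq (s : seq nat) i : i < size s -> rot i s = rev s ->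
  exists t, 0 < t <= size s /\ s = rev (take t s) ++ rev (drop t s).
Proof.
move=> hi E; case: (posnP i) => [i0|ip].
  exists (size s); split; first lia.
  by rewrite take_size drop_size /= cats0 -E i0 rot0.
exists i; split; first lia.
by rewrite -rev_cat -{1}(revK s) -E /rot.
Qed.

Lemma head_big (u : seq nat) b m M t : size u < t <= size u + 1 + m ->
  exists y r, rev (take t (u ++ b :: nseq m M)) = y :: r /\ (y = b \/ y = M).
Proof.
move=> ht; rewrite take_cat ltnNge (ltnW (proj1 (andP ht))) /=.
have -> : t - size u = (t - size u).-1.+1 by lia.
rewrite /= take_nseq; last by lia.
rewrite revz rev_nseq; case: (t - size u).-1 => [|r] /=.
  by exists b, (rev u); split; [|left].
by exists M, (nseq r M ++ b :: rev u); split; [|right].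
Qed.

Lemma rot_big (u : seq nat) b m M i : size u < i < size u + 1 + m ->
  exists r, rot i (u ++ b :: nseq m M) = M :: r.
Proof.
move=> hi; rewrite /rot drop_cat ltnNge (ltnW (proj1 (andP hi))) /=.
have -> : i - size u = (i - size u).-1.+1 by lia.
rewrite /= drop_nseq.
have -> : m - (i - size u).-1 = (m - (i - size u).-1).-1.+1 by lia.
by eexists.
Qed.

Section Beta.
Variables (x : nat) (u' : seq nat) (a m M : nat).
Hypothesis ha : a < M.
Hypothesis hall : all (fun y => y <= M) (x :: u').
Let u := x :: u'.
Let K := nseq m M.
Hypothesis Hb : is_bracelet (u ++ a :: K).

Let hsz b : size (u ++ b :: K) = size u + 1 + m.
Proof. by rewrite size_cat /= size_nseq; lia. Qed.

Lemma Hrev t : 0 < t <= size u + 1 + m ->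
  lex_le (u ++ a :: K) (rev (take t (u ++ a :: K)) ++ rev (drop t (u ++ a :: K))).
Proof.
move=> ht; rewrite -rot_rev_split.
have hi : size (drop t (u ++ a :: K)) < size (u ++ a :: K) by rewrite size_drop hsz; lia.
by case/andP: (brP Hb hi).
Qed.

Lemma hxa : x <= a.
Proof.
have hi : size u < size (u ++ a :: K) by rewrite hsz; lia.
case/andP: (brP Hb hi) => H _.
by move: H; rewrite rot_size_cat /u cat_cons => /lex_head_le.
Qed.

Lemma all_drop_u t : all (fun y => y <= M) (drop t u).
Proof.
have E := cat_take_drop t u; have := hall; rewrite -/u -{1}E all_cat.
by case/andP.
Qed.

Lemma small_split t : 0 < t <= size u ->
  lex_le (u ++ a.+1 :: K) (rev (take t (u ++ a.+1 :: K)) ++ rev (drop t (u ++ a.+1 :: K))) /\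
  (take t u = rev (take t u) ->
   drop t u ++ a.+1 :: K = rev (drop t u ++ a.+1 :: K) ->
   (drop t u = nseq (size (drop t u)) M /\ size (drop t u) < m /\ a.+1 = M)
   \/ drop t u = K).
Proof.
move=> /andP[tp ht].
have H := @Hrev t ltac:(lia).
rewrite takel_cat // dropl_cat // -{1}(cat_take_drop t u) -catA lex_cat ?size_rev // in H.
rewrite takel_cat // dropl_cat // -{1}(cat_take_drop t u) -catA lex_cat ?size_rev //.
case: eqP => hP; last by case: eqP H.
rewrite -hP eqxx in H.
have [C1 C2] := core _ _ _ _ (all_drop_u t) ha H.
by split.
Qed.

Lemma beta_bracelet : is_bracelet (u ++ a.+1 :: K).
Proof.
have hxM : x < M := leq_ltn_trans hxa ha.
apply: brI => i; rewrite hsz => hi; apply/andP; split.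
- case: (posnP i) => [->|ip]; first by rewrite rot0 lex_refl.
  case: (leqP i (size u)) => hiu; last first.
    have [r ->] := @rot_big u a.+1 m M i ltac:(lia).
    by rewrite /u /= hxM.
  have hia : i < size (u ++ a :: K) by rewrite hsz; lia.
  case/andP: (brP Hb hia) => H _.
  set L := size u - i + 1.
  have E1 b : u ++ b :: K = take L u ++ (drop L u ++ b :: K) by rewrite catA cat_take_drop.
  have E2 b : rot i (u ++ b :: K) = rcons (drop i u) b ++ (K ++ take i u).
    by rewrite rot_cat_le // cat_rcons.
  have hs b : size (take L u) = size (rcons (drop i u) b).
    by rewrite size_rcons size_drop size_takel /L; lia.
  have hP : lex_le (take L u) (rcons (drop i u) a).
    move: H; rewrite E2 E1 lex_cat ?hs //; case: eqP => [-> _|_ //]; exact: lex_refl.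
  rewrite E2 E1 lex_cat ?hs //.
  case: eqP => [E|_].
    by move: hP; rewrite E -!cats1 lex_cat // eqxx => /lex_head_le; lia.
  apply: lex_trans hP _; by rewrite -!cats1 lex_cat // eqxx /= ltnSn.
- set t := size u + 1 + m - i.
  have -> : i = size (drop t (u ++ a.+1 :: K)) by rewrite size_drop hsz /t; lia.
  rewrite rot_rev_split.
  case: (leqP t (size u)) => htu.
    exact: (small_split (t:=t) ltac:(lia)).1.
  have [y [r [Ey hy]]] := @head_big u a.+1 m M t ltac:(lia).
  rewrite Ey /u cat_cons /=.
  have -> // : x < y by case: hy => ->; [rewrite ltnS hxa|].
Qed.

Lemma beta_asym : ~~ in_rotations (rev (u ++ a :: K)) (u ++ a :: K) ->
  in_rotations (rev (u ++ a.+1 :: K)) (u ++ a.+1 :: K) ->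
  exists t, 0 < t <= size u /\ take t u = rev (take t u) /\
    drop t u = nseq (size (drop t u)) M /\ size (drop t u) < m /\ a.+1 = M.
Proof.
move=> Hasym /existsP [[i hi] /eqP /= E].
have [t [ht Et]] := rot_rev_eq hi E.
move: ht; rewrite hsz => ht.
case: (leqP t (size u)) => htu; last first.
  have [y [r [Ey hy]]] := @head_big u a.+1 m M t ltac:(lia).
  move: Et; rewrite Ey /u /= => -[hxy _].
  have h1 := hxa; have h2 := leq_ltn_trans hxa ha; case: hy => hy; lia.
have [_ C2] := small_split (t:=t) ltac:(lia).
move: Et; rewrite takel_cat // dropl_cat // -{1}(cat_take_drop t u) -catA => /eqP.
rewrite eqseq_cat ?size_rev // => /andP[/eqP hP /eqP hQ].
case: (C2 hP hQ) => [H|H]; first by exists t; split; [move: ht htu => /=; lia|].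
case/negP: Hasym; apply/existsP.
have hts : t < size (u ++ a :: K) by rewrite hsz; lia.
exists (Ordinal hts); apply/eqP; change (rot t (u ++ a :: K) = rev (u ++ a :: K)).
have Ea : u ++ a :: K = take t u ++ (K ++ a :: K) by rewrite -H catA cat_take_drop.
rewrite Ea.
have := rot_size_cat (take t u) (K ++ a :: K); rewrite size_takel // => ->.
by rewrite rev_cat revz /K rev_nseq -hP.
Qed.

End Beta.
End Aux.
Import Aux.

Lemma LNM_eq k (u : seq nat) a m : a != k.-1 ->
  LastNonMax k (u ++ a :: nseq m k.-1) = u ++ a.+1 :: nseq m k.-1.
Proof.
move=> ha; rewrite /LastNonMax revz rev_nseq find_cat has_nseq /= eqxx andbF size_nseq /= ha addn0.
rewrite size_cat /= size_nseq.
have -> : (size u + m.+1 - m).-1 = size u by lia.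
by rewrite take_size_cat // nth_cat ltnn subnn.
Qed.

Theorem mainTheorem5 (n k : nat) (alpha : seq nat) (j l : nat) :
  3 <= n -> 3 <= k -> in_A k n alpha ->
  1 <= j <= n -> nth 0 alpha j.-1 != k.-1 ->
  (forall i, j < i <= n -> nth 0 alpha i.-1 = k.-1) ->
  1 <= l < j -> nth 0 alpha l.-1 != k.-1 ->
  (forall i, l < i < j -> nth 0 alpha i.-1 = k.-1) ->
  (if [|| nth 0 alpha n.-1 < k.-1, nth 0 alpha j.-1 < k.-2
        | ~~ is_palindrome (take l alpha)]
   then in_A k n (LastNonMax k alpha)
   else symmetric_bracelet (LastNonMax k alpha)).
Proof.
move=> hn hk HA /andP[hj1 hjn] hajM Hafter /andP[hl1 hlj] halM Hbetween.
case/and4P: (HA) => /eqP hsize halph Hbr /andP[_ Hasym].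
have Hal : alpha = take j.-1 alpha ++ nth 0 alpha j.-1 :: nseq (n - j) k.-1.
  rewrite -{1}(cat_take_drop j.-1 alpha) (drop_nth 0); last by rewrite hsize; lia.
  congr (_ ++ _ :: _).
  apply: (@eq_from_nth _ 0); first by rewrite size_drop size_nseq hsize; lia.
  move=> i; rewrite size_drop hsize => hi.
  rewrite nth_drop nth_nseq.
  have -> : i < n - j by lia.
  have -> : j.-1.+1 + i = (j + i).+1.-1 by lia.
  apply: Hafter; lia.
have [a Ea] : exists a, nth 0 alpha j.-1 = a by eexists.
have [u Eu] : exists u, take j.-1 alpha = u by eexists.
have hsu : size u = j.-1 by rewrite -Eu size_takel // hsize; lia.
rewrite Ea Eu in Hal; rewrite Ea in hajM.
have [hall hak] : all (fun y => y <= k.-1) u /\ a < k.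
  move: halph; rewrite /over_alphabet Hal all_cat /= => /andP[hu /andP[ha _]].
  split => //; apply: sub_all hu => y /= hy; lia.
have ha : a < k.-1 by move/eqP: hajM => hajM'; lia.
case Eu' : u => [|x u']; first by move: hsu; rewrite Eu' /=; lia.
rewrite Eu' in Hal hsu hall.
rewrite Hal in Hbr Hasym.
have Bbr := beta_bracelet ha hall Hbr.
set beta := (x :: u') ++ a.+1 :: nseq (n - j) k.-1.
have Nbr : is_necklace beta.
  by apply/forallP => i; case/andP: (forallP Bbr i).
have hsb : size beta = n by rewrite /beta size_cat /= size_nseq; move: hsu => /= hsu; lia.
have hLN : LastNonMax k alpha = beta by rewrite Hal LNM_eq.
rewrite hLN.
case: ifP => cond.
- rewrite /in_A; apply/and4P; split => //.
  + by rewrite hsb.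
  + rewrite /over_alphabet /beta all_cat /= all_nseq; apply/and3P; split.
    * by apply: sub_all hall => y /= hy; lia.
    * lia.
    * apply/orP; right; lia.
  rewrite /asymmetric_necklace Nbr /=; apply/negP.
  move=> /(beta_asym ha hall Hbr Hasym) [t [ht [hP [hv [hvm ham]]]]].
  move: cond; rewrite Ea.
  have hsd : size (drop t (x :: u')) = j.-1 - t by rewrite size_drop hsu.
  have e1 : nth 0 alpha n.-1 = k.-1 by apply: Hafter; lia.
  have e2 : a = k.-2 by lia.
  have hxM : x < k.-1 := leq_ltn_trans (hxa ha hall Hbr) ha.
  have hxt : nth 0 alpha t.-1 = x.
    rewrite Hal nth_cat hsu ifT; last by lia.
    have h1 : t.-1 < t by lia.
    have h2 : t <= size (x :: u') by rewrite hsu; lia.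
    rewrite -(nth_take 0 h1) hP nth_rev; last by rewrite ?size_rev size_takel.
    rewrite size_takel //.
    have -> : t - t.-1.+1 = 0 by lia.
    have h0 : 0 < t by lia.
    by rewrite (nth_take 0 h0).
  have e3 : t = l.
    case: (ltngtP t l) => // htl.
      have : nth 0 alpha l.-1 = k.-1.
        rewrite Hal nth_cat hsu ifT; last by lia.
        have -> : l.-1 = t + (l.-1 - t) by lia.
        by rewrite -nth_drop hv nth_nseq hsd ifT //; lia.
      by move/eqP: halM.
    have := Hbetween t ltac:(lia); rewrite hxt; lia.
  subst t.
  rewrite e1 ltnn e2 ltnn /= /is_palindrome Hal takel_cat ?hsu; last by lia.
  by rewrite -hP eqxx.
- move/negbT: cond; rewrite !negb_or negbK Ea -leqNgt => /and3P[_ c2 c3].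
  have ha1 : a.+1 = k.-1 by lia.
  have hlu : l <= size (x :: u') by rewrite hsu; lia.
  have Pl : take l (x :: u') = rev (take l (x :: u')).
    by apply/eqP; move: c3; rewrite /is_palindrome Hal takel_cat.
  have Dl : drop l (x :: u') = nseq (j.-1 - l) k.-1.
    apply: (@eq_from_nth _ 0); first by rewrite size_drop size_nseq hsu.
    move=> i; rewrite size_drop hsu => hi.
    rewrite nth_drop nth_nseq ifT; last by lia.
    have <- : nth 0 alpha (l + i) = nth 0 (x :: u') (l + i).
      by rewrite Hal nth_cat hsu ifT //; lia.
    have -> : l + i = (l + i).+1.-1 by lia.
    apply: Hbetween; lia.
  rewrite /symmetric_bracelet Bbr /symmetric_necklace Nbr /=.
  apply/existsP.
  have hls : l < size beta by rewrite hsb; lia.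
  exists (Ordinal hls); apply/eqP; change (rot l beta = rev beta).
  have Eb : beta = take l (x :: u') ++ nseq (j.-1 - l + 1 + (n - j)) k.-1.
    by rewrite /beta -{1}(cat_take_drop l (x :: u')) -catA Dl ha1 !nseqD -catA.
  rewrite Eb rev_cat rev_nseq -Pl.
  by have := rot_size_cat (take l (x :: u')) (nseq (j.-1 - l + 1 + (n - j)) k.-1); rewrite size_takel.
Qed.
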